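(* Let $X$ be a Banach space with a normalized 1-unconditional basis $(x_i)_i$. Then the sequence $(v_i)_i$ in $\mathcal{J}_*(X)$ satisfies: (i) $(v_i)_i$ is a normalized monotone Schauder basis of $\mathcal{J}_*(X)$; (ii) for all scalars $(a_i)_{i=1}^n$, $|\sum_{i=1}^na_i|\le\|\sum_{i=1}^na_iv_i\|$; (iii) the unit ball of $\mathcal{J}_*(X)$ is a 1-norming set for $J(X)$, hence $J(X)$ is naturally isometric to a subspace of $\mathcal{J}_*(X)^*$ under the identification $v_1^*=e_1$, $v_{i+1}^*=e_{i+1}-e_i$ ($i\in\mathbb{N}$), where $(v_i^* )$ are the biorthogonal functionals of $(v_i)$; in particular the closed linear span of $(v_i^* )_i$ is isometrically isomorphic to $J(X)$; (iv) for every eventually zero scalar sequence $(a_i)_i$, $\|\sum_ia_iv_i^*\|=\sup\{\|\sum_n(a_{k_n}-a_{m_n})x_{k_n}\|:1\le k_1<m_1\le k_2<m_2\le\cdots\}$; (v) for all scalars $(a_i)_{i=1}^n$, $(b_i)_{i=1}^n$, $\|\sum_{i=1}^na_ib_iv_i^*\|\le 2\|\sum_{i=1}^na_iv_i^*\|\,\|\sum_{i=1}^nb_iv_i^*\|$.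
   Context: The jamesification $J(X)$ of $(x_i)_i$ is the completion of $c_{00}(\mathbb{N})$ under $\|\sum_ia_ie_i\|=\sup\{\|\sum_n(\sum_{i=k_n}^{m_n}a_i)x_{k_n}\|:1\le k_1\le m_1<k_2\le m_2<\cdots\}$, with unit vector basis $(e_i)$ and biorthogonals $(e_i^* )\subset J(X)^*$. Let $s\in J(X)^*$ be given by $s(\sum_ia_ie_i)=\sum_ia_i$ and $\mathcal{J}_*(X)=\mathbb{R}s\oplus\overline{\mathrm{span}}\{e_i^*:i\in\mathbb{N}\}\subset J(X)^*$. Define $v_1=s=w^*\text{-}\sum_{j\ge1}e_j^*$ and $v_{i+1}=s-\sum_{j=1}^ie_j^*=w^*\text{-}\sum_{j\ge i+1}e_j^*$. *)

(* Defs.v *)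
From HB Require Import structures.
From mathcomp Require Import all_boot all_order all_algebra.
From mathcomp Require Import all_classical all_reals all_analysis.
From Stdlib Require Import ClassicalEpsilon.
Set Implicit Arguments. Unset Strict Implicit. Unset Printing Implicit Defensive.
Import Order.TTheory GRing.Theory Num.Theory.
Import numFieldNormedType.Exports.
Local Open Scope classical_set_scope.
Local Open Scope ring_scope.

(* Indices are 0-based throughout: paper index i corresponds to i-1 here. *)

Section Defs.
Variable R : realType.

Section BasisX.
Variable X : normedModType R.
Variable x : nat -> X.

Definition schauder_basis : Prop :=
  forall y : X, exists! a : nat -> R,
    (fun n : nat => \sum_(i < n) a i *: x i) @ \oo --> y.

Definition normalized : Prop := forall i, `|x i| = 1.

Definition one_unconditional : Prop :=
  forall (n : nat) (a : nat -> R) (eps : nat -> bool),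
    `|\sum_(i < n) ((-1) ^+ eps i * a i) *: x i| <= `|\sum_(i < n) a i *: x i|.

(* admissible families of intervals [k_1,m_1],[k_2,m_2],... with
   k_1 <= m_1 < k_2 <= m_2 < ... ; pair (k,m) = interval [k,m] *)
Definition J_admissible (s : seq (nat * nat)) : bool :=
  all (fun p => (p.1 <= p.2)%N) s && sorted (fun p q => (p.2 < q.1)%N) s.

Definition J_term (a : nat -> R) (s : seq (nat * nat)) : X :=
  \sum_(p <- s) (\sum_(p.1 <= i < p.2.+1) a i) *: x p.1.

Definition J_norm (a : nat -> R) : R :=
  sup [set `|J_term a s| | s in [set s | J_admissible s]].

Definition Jd_admissible (s : seq (nat * nat)) : bool :=
  all (fun p => (p.1 < p.2)%N) s && sorted (fun p q => (p.2 <= q.1)%N) s.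

Definition Jd_term (a : nat -> R) (s : seq (nat * nat)) : X :=
  \sum_(p <- s) (a p.1 - a p.2) *: x p.1.

Definition Jd_norm (a : nat -> R) : R :=
  sup [set `|Jd_term a s| | s in [set s | Jd_admissible s]].
End BasisX.

Definition trunc (n : nat) (a : nat -> R) : nat -> R :=
  fun i => if (i < n)%N then a i else 0.

Section Functionals.
Variable V : normedModType R.

Definition bdd_linear (f : V -> R) : Prop :=
  (forall (c : R) (y z : V), f (c *: y + z) = c * f y + f z) /\
  exists C : R, forall y : V, `|f y| <= C * `|y|.

Definition dnorm (f : V -> R) : R :=
  sup [set `|f y| | y in [set y : V | `|y| <= 1]].

(* J_*(X) = R s (+) closed span {e_i^*}, as a set of functionals *)
Definition Jstar (s : V -> R) (estar : nat -> V -> R) (f : V -> R) : Prop :=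
  bdd_linear f /\
  exists c : R, forall eps : R, 0 < eps -> exists (n : nat) (b : nat -> R),
    dnorm (fun y => f y - c * s y - \sum_(i < n) b i * estar i y) < eps.

(* v_1 = s, v_{i+1} = s - sum_{j<=i} e_j^*  (0-based: v 0 = s) *)
Definition vseq (s : V -> R) (estar : nat -> V -> R) (i : nat) : V -> R :=
  fun y => s y - \sum_(j < i) estar j y.

Definition fcomb (n : nat) (a : nat -> R) (g : nat -> V -> R) : V -> R :=
  fun y => \sum_(i < n) a i * g i y.

Definition expansion (g : nat -> V -> R) (f : V -> R) (a : nat -> R) : Prop :=
  (fun N : nat => dnorm (fun y => f y - fcomb N a g y)) @ \oo --> (0 : R).

(* the coordinates of f in the basis (g_i): v_i^*(f) = coef g f i *)
Definition coef (g : nat -> V -> R) (f : V -> R) : nat -> R :=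
  epsilon (inhabits (fun _ : nat => (0 : R))) (expansion g f).

(* norm of sum_{i<n} a_i v_i^* in J_*(X)^* *)
Definition vstar_norm (s : V -> R) (estar : nat -> V -> R)
    (n : nat) (a : nat -> R) : R :=
  sup [set `|\sum_(i < n) a i * coef (vseq s estar) f i|
        | f in [set f | Jstar s estar f /\ dnorm f <= 1]].
(* the vectors of J(X) identified with v_i^*: e_1 and e_{i+1} - e_i *)
Definition jdiff (e : nat -> V) (i : nat) : V :=
  if i is j.+1 then e j.+1 - e j else e 0%N.
End Functionals.
End Defs.

(* Main.v *)
Require Import Defs.
From HB Require Import structures.
From mathcomp Require Import all_boot all_order all_algebra.
From mathcomp Require Import all_classical all_reals all_analysis.
From mathcomp Require Import ring lra.
From Stdlib Require Import ClassicalEpsilon.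
Import Order.TTheory GRing.Theory Num.Theory.
Import numFieldNormedType.Exports.
Local Open Scope classical_set_scope.
Local Open Scope ring_scope.
Section HBsec.
Variables (R : realType) (X : normedModType R).

Lemma sumZ_lin (r : nat) (d d' : nat -> R) (u : nat -> X) (c : R) :
  \sum_(i < r) (c * d i + d' i) *: u i =
  c *: \sum_(i < r) d i *: u i + \sum_(i < r) d' i *: u i.
Proof.
rewrite scaler_sumr -big_split /=; apply: eq_bigr => i _.
by rewrite scalerDl scalerA.
Qed.

Lemma sumM_lin (r : nat) (d d' : nat -> R) (l : nat -> R) (c : R) :
  \sum_(i < r) l i * (c * d i + d' i) =
  c * \sum_(i < r) l i * d i + \sum_(i < r) l i * d' i.
Proof.
rewrite mulr_sumr -big_split /=; apply: eq_bigr => i _.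
by rewrite mulrDr mulrCA.
Qed.

Lemma sumZ_c (r : nat) (d : nat -> R) (u : nat -> X) (c : R) :
  \sum_(i < r) (c * d i) *: u i = c *: \sum_(i < r) d i *: u i.
Proof. by rewrite scaler_sumr; apply: eq_bigr => i _; rewrite scalerA. Qed.

Lemma sumM_c (r : nat) (d : nat -> R) (l : nat -> R) (c : R) :
  \sum_(i < r) l i * (c * d i) = c * \sum_(i < r) l i * d i.
Proof. by rewrite mulr_sumr; apply: eq_bigr => i _; rewrite mulrCA. Qed.

Lemma HBgen (u : nat -> X) (r : nat) : exists lam : nat -> R,
  lam 0%N = `|u 0%N| /\
  forall d : nat -> R, \sum_(i < r.+1) lam i * d i <= `|\sum_(i < r.+1) d i *: u i|.
Proof.
elim: r => [|r [lam [lam0 H]]].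
  exists (fun _ => `|u 0%N|); split => // d.
  rewrite !big_ord1 normrZ mulrC; apply: ler_wpM2r => //; exact: ler_norm.
set ur := u r.+1.
pose A := [set z : R | exists d : nat -> R,
  z = \sum_(i < r.+1) lam i * d i - `|\sum_(i < r.+1) d i *: u i - ur|].
have K : forall d d' : nat -> R,
  \sum_(i < r.+1) lam i * d i - `|\sum_(i < r.+1) d i *: u i - ur| <=
  `|\sum_(i < r.+1) d' i *: u i + ur| - \sum_(i < r.+1) lam i * d' i.
  move=> d d'.
  have := H (fun i => 1 * d i + d' i).
  rewrite sumM_lin sumZ_lin !mul1r scale1r => h.
  have h2 := ler_normD (\sum_(i < r.+1) d i *: u i - ur)
                       (\sum_(i < r.+1) d' i *: u i + ur).
  have e : \sum_(i < r.+1) d i *: u i - ur + (\sum_(i < r.+1) d' i *: u i + ur)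
     = \sum_(i < r.+1) d i *: u i + \sum_(i < r.+1) d' i *: u i.
    by rewrite addrACA addNr addr0.
  rewrite e in h2; lra.
have hsA : has_sup A.
  split; first by exists (\sum_(i < r.+1) lam i * 0 - `|\sum_(i < r.+1) 0 *: u i - ur|); exists (fun _ => 0).
  exists (`|\sum_(i < r.+1) 0 *: u i + ur| - \sum_(i < r.+1) lam i * 0) => z [d ->].
  exact: (K d (fun _ => 0)).
set t := sup A.
have tle : forall d' : nat -> R, t <= `|\sum_(i < r.+1) d' i *: u i + ur| - \sum_(i < r.+1) lam i * d' i.
  move=> d'; apply: ge_sup; first by case: hsA.
  by move=> z [d ->]; exact: (K d d').
have tge : forall d : nat -> R, \sum_(i < r.+1) lam i * d i - `|\sum_(i < r.+1) d i *: u i - ur| <= t.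
  move=> d; apply: (sup_upper_bound hsA); by exists d.
exists (fun i => if i == r.+2.-1 then t else lam i); split => // d.
rewrite big_ord_recr [X in _ <= `|X|]big_ord_recr /= eqxx.
have -> : \sum_(i < r.+1) (if widen_ord (leqnSn r.+1) i == r.+1 :> nat then t else lam (widen_ord (leqnSn r.+1) i)) * d (widen_ord (leqnSn r.+1) i)
   = \sum_(i < r.+1) lam i * d i.
  by apply: eq_bigr => i _; rewrite /= (ltn_eqF (ltn_ord i)).
have -> : \sum_(i < r.+1) d (widen_ord (leqnSn r.+1) i) *: u (widen_ord (leqnSn r.+1) i)
   = \sum_(i < r.+1) d i *: u i by [].
set sg := d r.+1.
set L := \sum_(i < r.+1) lam i * d i.
set V := \sum_(i < r.+1) d i *: u i.
case: (ltrgt0P sg) => hs.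
-
  have /= := tle (fun i => sg^-1 * d i).
  rewrite sumM_c sumZ_c.
  rewrite -/L -/V.
  have -> : sg^-1 *: V + ur = sg^-1 *: (V + sg *: u r.+1).
    by rewrite scalerDr scalerA mulVf ?gt_eqF // scale1r.
  rewrite normrZ gtr0_norm ?invr_gt0 // => h.
  have h1 : sg * t <= sg * (sg^-1 * `|V + sg *: u r.+1| - sg^-1 * L).
    by rewrite ler_pM2l.
  rewrite mulrBr !mulrA divff ?gt_eqF // !mul1r in h1.
  rewrite /=; lra.
-
  have /= := tge (fun i => (- sg)^-1 * d i).
  rewrite sumM_c sumZ_c.
  rewrite -/L -/V.
  have -> : (- sg)^-1 *: V - ur = (- sg)^-1 *: (V + sg *: u r.+1).
    by rewrite scalerDr scalerA invrN mulNr mulVf ?lt_eqF // scaleN1r.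
  rewrite normrZ gtr0_norm ?invr_gt0 ?oppr_gt0 // => h.
  have h1 : (- sg) * ((- sg)^-1 * L - (- sg)^-1 * `|V + sg *: u r.+1|) <= (- sg) * t.
    by rewrite ler_pM2l ?oppr_gt0.
  rewrite mulrBr !mulrA divff ?oppr_eq0 ?lt_eqF // !mul1r in h1.
  rewrite /=; lra.
-
  rewrite hs mulr0 addr0 scale0r addr0; exact: H.
Qed.

Lemma sumMN (r : nat) (d l : nat -> R) :
  \sum_(i < r) l i * (- d i) = - \sum_(i < r) l i * d i.
Proof. by rewrite -sumrN; apply: eq_bigr => i _; rewrite mulrN. Qed.

Lemma sumZN (r : nat) (d : nat -> R) (u : nat -> X) :
  \sum_(i < r) (- d i) *: u i = - \sum_(i < r) d i *: u i.
Proof. by rewrite -sumrN; apply: eq_bigr => i _; rewrite scaleNr. Qed.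

Lemma HBfin (u : nat -> X) (r : nat) (c : nat -> R) : exists mu : nat -> R,
  (forall d : nat -> R, `|\sum_(i < r) mu i * d i| <= `|\sum_(i < r) d i *: u i|) /\
  \sum_(i < r) mu i * c i = `|\sum_(i < r) c i *: u i|.
Proof.
set w := \sum_(i < r) c i *: u i.
have [lam [lam0 H]] := HBgen (fun i => if i is j.+1 then u j else w) r.
exists (fun i => lam i.+1).
have H1 : forall (d0 : R) (d : nat -> R),
  lam 0%N * d0 + \sum_(i < r) lam i.+1 * d i <= `|d0 *: w + \sum_(i < r) d i *: u i|.
  move=> d0 d; have := H (fun i => if i is j.+1 then d j else d0).
  by rewrite big_ord_recl [X in _ <= `|X| -> _]big_ord_recl.
split.
  move=> d; rewrite ler_norml; apply/andP; split.
    have /= := H1 0 (fun i => - d i).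
    rewrite (eq_bigr (fun i : 'I_r => - (d i *: u i))); last by move=> i _; rewrite scaleNr.
    rewrite (eq_bigr (fun i : 'I_r => - (lam i.+1 * d i))); last by move=> i _; rewrite mulrN.
    by rewrite mulr0 add0r scale0r add0r !sumrN normrN lerNl.
  have := H1 0 d.
  by rewrite mulr0 add0r scale0r add0r.
have h1 := H1 1 (fun i => - c i).
move: h1.
rewrite (eq_bigr (fun i : 'I_r => - (c i *: u i))); last by move=> i _; rewrite scaleNr.
rewrite (eq_bigr (fun i : 'I_r => - (lam i.+1 * c i))); last by move=> i _; rewrite mulrN.
rewrite !sumrN => h1.
rewrite mulr1 scale1r -/w subrr normr0 lam0 /= in h1.
have h2 := H1 (-1) c.
rewrite mulrN1 scaleN1r -/w addNr normr0 lam0 /= in h2.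
lra.
Qed.
End HBsec.

Section Unc.
Variables (R : realType) (X : normedModType R) (x : nat -> X).
Hypothesis hunc : one_unconditional x.

Lemma mult_step (j : nat) : forall (N : nat) (g b : nat -> R),
  (forall i, `|b i| <= 1) -> (forall i, (j <= i)%N -> b i = 1) ->
  `|\sum_(i < N) (b i * g i) *: x i| <= `|\sum_(i < N) g i *: x i|.
Proof.
elim: j => [|j IH] N g b hb1 hb.
  by rewrite (eq_bigr (fun i : 'I_N => g i *: x i)) // => i _; rewrite hb // mul1r.
set t := b j.
pose b1 := fun i => if i == j then 1 else b i.
pose b2 := fun i => if i == j then -1 else b i.
have hb1' : forall i, `|b1 i| <= 1.
  by move=> i; rewrite /b1; case: eqP => _; rewrite ?normr1.
have hb1j : forall i, (j <= i)%N -> b1 i = 1.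
  move=> i hi; rewrite /b1; case: eqP => // /eqP hne.
  by apply: hb; rewrite ltn_neqAle eq_sym hne.
have V1 := IH N g b1 hb1' hb1j.
have V2 : `|\sum_(i < N) (b2 i * g i) *: x i| <= `|\sum_(i < N) (b1 i * g i) *: x i|.
  have := hunc N (fun i => b1 i * g i) (fun i => i == j).
  congr (`|_| <= _); apply: eq_bigr => i _.
  by rewrite /b1 /b2; case: eqP => _ /=; rewrite ?expr1 ?expr0 ?mul1r ?mulN1r ?mulNr.
have E : 2%:R *: \sum_(i < N) (b i * g i) *: x i =
   (1 + t) *: \sum_(i < N) (b1 i * g i) *: x i + (1 - t) *: \sum_(i < N) (b2 i * g i) *: x i.
  rewrite !scaler_sumr -big_split /=; apply: eq_bigr => i _.
  rewrite !scalerA -scalerDl; congr (_ *: _).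
  rewrite /b1 /b2; case: eqP => [->|_]; rewrite -/t; ring.
have ht : `|t| <= 1 by exact: hb1.
have ht1 : 0 <= 1 + t by move: ht; rewrite ler_norml; lra.
have ht2 : 0 <= 1 - t by move: ht; rewrite ler_norml; lra.
have := ler_normD ((1 + t) *: \sum_(i < N) (b1 i * g i) *: x i)
                  ((1 - t) *: \sum_(i < N) (b2 i * g i) *: x i).
rewrite -E !normrZ (ger0_norm ht1) (ger0_norm ht2) ger0_norm // => h.
have h1 : (1 + t) * `|\sum_(i < N) (b1 i * g i) *: x i| <= (1 + t) * `|\sum_(i < N) g i *: x i|.
  nra.
have h2 : (1 - t) * `|\sum_(i < N) (b2 i * g i) *: x i| <= (1 - t) * `|\sum_(i < N) g i *: x i|.
  have := le_trans V2 V1; nra.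
lra.
Qed.

Lemma mult_le (K : R) (N : nat) (g b : nat -> R) : 0 <= K ->
  (forall i, `|b i| <= K) ->
  `|\sum_(i < N) (b i * g i) *: x i| <= K * `|\sum_(i < N) g i *: x i|.
Proof.
move=> K0 hb; case: (eqVneq K 0) => [K00|Kn0].
  rewrite K00 mul0r big1 ?normr0 // => i _.
  by have := hb i; rewrite K00 normr_le0 => /eqP ->; rewrite mul0r scale0r.
have Kp : 0 < K by rewrite lt_def Kn0.
pose b' := fun i => if (i < N)%N then b i / K else 1.
have := mult_step N N g b'.
have -> : \sum_(i < N) (b i * g i) *: x i = K *: \sum_(i < N) (b' i * g i) *: x i.
  rewrite scaler_sumr; apply: eq_bigr => i _.
  by rewrite scalerA /b' ltn_ord mulrA mulrCA divff ?mulr1.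
rewrite normrZ gtr0_norm // => h; rewrite ler_pM2l //; apply: h.
  move=> i; rewrite /b'; case: ifP => _; last by rewrite normr1.
  by rewrite normrM normrV ?unitfE // (gtr0_norm Kp) ler_pdivrMr // mul1r.
by move=> i hi; rewrite /b' ltnNge hi.
Qed.
End Unc.

Set Implicit Arguments. Unset Strict Implicit.
Fixpoint adm (L : nat) (s : seq (nat * nat)) : bool :=
  if s is p :: t then [&& (L <= p.1)%N, (p.1 <= p.2)%N & adm p.2.+1 t] else true.

Fixpoint admd (L : nat) (s : seq (nat * nat)) : bool :=
  if s is p :: t then [&& (L <= p.1)%N, (p.1 < p.2)%N & admd p.2 t] else true.

Lemma adm_mono L L' s : (L' <= L)%N -> adm L s -> adm L' s.
Proof. case: s => //= p t hL /and3P [h1 h2 h3]; rewrite h2 h3 (leq_trans hL h1) //. Qed.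

Lemma admd_mono L L' s : (L' <= L)%N -> admd L s -> admd L' s.
Proof. case: s => //= p t hL /and3P [h1 h2 h3]; rewrite h2 h3 (leq_trans hL h1) //. Qed.

Lemma adm_J L s : adm L s -> J_admissible s.
Proof.
rewrite /J_admissible; elim: s L => //= p t IH L /and3P [h1 h2 h3].
have /andP [ha hs] := IH _ h3.
rewrite h2 ha /=; case: t IH h3 ha hs => //= q t' _ /and3P [hq1 _ _] _ ->.
by rewrite andbT.
Qed.

Lemma J_adm s : J_admissible s -> adm 0 s.
Proof.
case: s => // p t hJ.
suff h : adm p.1 (p :: t) by exact: adm_mono (leq0n _) h.
move: hJ; rewrite /J_admissible /= => /andP [/andP [hp ha] hs].
elim: t p hp ha hs => [|q t IH] p hp ha hs /=; first by rewrite leqnn hp.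
rewrite leqnn hp /=.
move: ha hs => /= /andP [hq ha] /andP [hpq hs].
by rewrite hpq hq; have /and3P [_ _ ->] := IH q hq ha hs.
Qed.

Lemma admd_Jd L s : admd L s -> Jd_admissible s.
Proof.
rewrite /Jd_admissible; elim: s L => //= p t IH L /and3P [h1 h2 h3].
have /andP [ha hs] := IH _ h3.
rewrite h2 ha /=; case: t IH h3 ha hs => //= q t' _ /and3P [hq1 _ _] _ ->.
by rewrite andbT.
Qed.

Lemma Jd_admd s : Jd_admissible s -> admd 0 s.
Proof.
case: s => // p t hJ.
suff h : admd p.1 (p :: t) by exact: admd_mono (leq0n _) h.
move: hJ; rewrite /Jd_admissible /= => /andP [/andP [hp ha] hs].
elim: t p hp ha hs => [|q t IH] p hp ha hs /=; first by rewrite leqnn hp.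
rewrite leqnn hp /=.
move: ha hs => /= /andP [hq ha] /andP [hpq hs].
by rewrite hpq hq; have /and3P [_ _ ->] := IH q hq ha hs.
Qed.

Section Gsec.
Variable R : realType.

Lemma sum_ext (g : nat -> R) (n : nat) (hg : forall i, (n <= i)%N -> g i = 0)
  (j M : nat) : (n <= M)%N -> \sum_(j <= i < n) g i = \sum_(j <= i < M) g i.
Proof.
move=> hnM; case: (leqP j n) => hj.
  rewrite [RHS](@big_cat_nat _ _ _ n) //= [X in _ = _ + X]big_nat_cond [X in _ = _ + X]big1 ?addr0 //.
  by move=> i /andP [/andP [hi _] _]; apply: hg.
rewrite big_geq ?(ltnW hj) // big_nat_cond big1 // => i /andP [/andP [hi _] _].
by apply: hg; rewrite (leq_trans (ltnW hj) hi).
Qed.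

Lemma G_split (g : nat -> R) (n : nat) (hg : forall i, (n <= i)%N -> g i = 0)
  (k j : nat) : (k <= j)%N ->
  \sum_(k <= i < j) g i + \sum_(j <= i < n) g i = \sum_(k <= i < n) g i.
Proof.
move=> hkj; set M := maxn n j.
rewrite (@sum_ext g n hg j M (leq_maxl n j)) (@sum_ext g n hg k M (leq_maxl n j)).
by rewrite -big_cat_nat // leq_maxr.
Qed.

Lemma adm_sum_le (g : nat -> R) (n : nat) (hg : forall i, (n <= i)%N -> g i = 0)
  (g0 : forall i, 0 <= g i) (s : seq (nat * nat)) (L : nat) :
  adm L s -> \sum_(p <- s) \sum_(p.1 <= i < p.2.+1) g i <= \sum_(L <= i < n) g i.
Proof.
elim: s L => [|p t IH] L /=.
  by move=> _; rewrite big_nil; apply: sumr_ge0 => i _.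
move=> /and3P [h1 h2 h3]; rewrite big_cons.
apply: (le_trans (lerD (lexx _) (IH _ h3))).
rewrite (@G_split g n hg p.1 p.2.+1 (leqW h2)) -(@G_split g n hg L p.1 h1) lerDr; exact: sumr_ge0.
Qed.
End Gsec.

Section Jsec.
Variables (R : realType) (X : normedModType R) (x : nat -> X).
Hypothesis hnorm : normalized x.

Lemma Jterm_le (b : nat -> R) (n : nat) (hb : forall i, (n <= i)%N -> b i = 0)
  (s : seq (nat * nat)) : J_admissible s ->
  `|J_term x b s| <= \sum_(i < n) `|b i|.
Proof.
move=> /J_adm hs; rewrite /J_term.
apply: (le_trans (ler_norm_sum _ _ _)).
rewrite -(big_mkord xpredT (fun i => `|b i|)).
have H : \sum_(p <- s) \sum_(p.1 <= i < p.2.+1) `|b i| <= \sum_(0 <= i < n) `|b i|.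
  apply: (@adm_sum_le R (fun i => `|b i|) n) => //.
  by move=> i hi; rewrite hb ?normr0.
apply: le_trans H; apply: ler_sum => p _; rewrite normrZ hnorm mulr1; exact: ler_norm_sum.
Qed.

Definition Jset (b : nat -> R) := [set `|J_term x b s| | s in [set s | J_admissible s]].

Lemma Jset_sup (b : nat -> R) (n : nat) (hb : forall i, (n <= i)%N -> b i = 0) :
  has_sup (Jset b).
Proof.
split; first by exists (`|J_term x b [::]|); exists [::].
exists (\sum_(i < n) `|b i|) => z [s hs <-]; exact: (@Jterm_le b n hb s hs).
Qed.

Lemma Jterm_le_norm (b : nat -> R) (n : nat) (hb : forall i, (n <= i)%N -> b i = 0)
  (s : seq (nat * nat)) : J_admissible s -> `|J_term x b s| <= J_norm x b.
Proof. by move=> hs; apply: (sup_upper_bound (@Jset_sup b n hb)); exists s. Qed.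

Lemma Jnorm_le (b : nat -> R) (n : nat) (hb : forall i, (n <= i)%N -> b i = 0) :
  J_norm x b <= \sum_(i < n) `|b i|.
Proof.
apply: ge_sup; first by exists (`|J_term x b [::]|); exists [::].
by move=> z [s hs <-]; exact: (@Jterm_le b n hb s hs).
Qed.

End Jsec.

Section Jdsec.
Variables (R : realType) (X : normedModType R) (x : nat -> X).

Lemma tele (a : nat -> R) (k m : nat) : (k <= m)%N ->
  \sum_(k <= i < m) (a i - a i.+1) = a k - a m.
Proof.
move=> hkm; rewrite (eq_bigr (fun i => - (a i.+1 - a i))); last by move=> i _; rewrite opprB.
by rewrite sumrN telescope_sumr // opprB.
Qed.

Definition dshift (p : nat * nat) := (p.1, p.2.-1).
Definition ushift (p : nat * nat) := (p.1, p.2.+1).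

Lemma admd_adm L s : admd L s -> adm L (map dshift s).
Proof.
elim: s L => //= p t IH L /and3P [h1 h2 h3]; rewrite h1 /=.
rewrite -ltnS prednK ?h2 ?(leq_ltn_trans (leq0n _) h2) //=.
exact: IH.
Qed.

Lemma adm_admd L s : adm L s -> admd L (map ushift s).
Proof.
elim: s L => //= p t IH L /and3P [h1 h2 h3]; rewrite h1 /= ltnS h2 /=.
exact: IH.
Qed.

Lemma ushift_dshift L s : admd L s -> map ushift (map dshift s) = s.
Proof.
elim: s L => //= p t IH L /and3P [h1 h2 h3]; rewrite (IH _ h3).
rewrite /ushift /dshift /= prednK; first by case: p {h1 h2 h3}.
exact: (leq_ltn_trans (leq0n _) h2).
Qed.

Lemma Jd_J_term (a : nat -> R) L s : admd L s ->
  Jd_term x a s = J_term x (fun i => a i - a i.+1) (map dshift s).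
Proof.
rewrite /Jd_term /J_term big_map.
elim: s L => [|p t IH] L /=; first by rewrite !big_nil.
move=> /and3P [h1 h2 h3]; rewrite !big_cons (IH _ h3) /=.
have hp : (0 < p.2)%N by exact: (leq_ltn_trans (leq0n _) h2).
by rewrite prednK // tele // ltnW.
Qed.

Lemma J_Jd_term (a : nat -> R) L s : adm L s ->
  J_term x (fun i => a i - a i.+1) s = Jd_term x a (map ushift s).
Proof.
move=> h; rewrite (Jd_J_term a (adm_admd h)).
suff -> : map dshift (map ushift s) = s by [].
by elim: s {h} => //= p t ->; case: p.
Qed.

Lemma Jd_norm_J (a : nat -> R) :
  Jd_norm x a = J_norm x (fun i => a i - a i.+1).
Proof.
rewrite /Jd_norm /J_norm; congr sup; apply/seteqP; split => z [s hs <-].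
  have hd := Jd_admd hs.
  exists (map dshift s); first exact: adm_J (admd_adm hd).
  by rewrite (Jd_J_term a hd).
have ha := J_adm hs.
exists (map ushift s); first exact: admd_Jd (adm_admd ha).
by rewrite (J_Jd_term a ha).
Qed.
End Jdsec.

Section Gfun.
Variables (R : realType) (X : normedModType R) (x : nat -> X).

Fixpoint gfun (F : nat * nat -> R) (s : seq (nat * nat)) (i : nat) : R :=
  if s is p :: t then (if i == p.1 then F p else gfun F t i) else 0.

Lemma gfun_zero F L s i : admd L s -> (i < L)%N -> gfun F s i = 0.
Proof.
elim: s L => //= p t IH L /and3P [h1 h2 h3] hi.
have -> : (i == p.1) = false by apply/negbTE; rewrite neq_ltn (leq_trans hi h1).
apply: (IH _ h3); exact: (ltn_trans (leq_trans hi h1) h2).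
Qed.

Lemma bound_exists (s : seq (nat * nat)) : exists N, all (fun p => (p.1 < N)%N) s.
Proof.
elim: s => [|p t [N hN]]; first by exists 0%N.
exists (maxn p.1.+1 N); rewrite /= leq_max ltnSn /=.
by apply: sub_all hN => q /= hq; rewrite leq_max hq orbT.
Qed.

Lemma gfun_sum F L s N : admd L s -> all (fun p => (p.1 < N)%N) s ->
  \sum_(p <- s) F p *: x p.1 = \sum_(i < N) gfun F s i *: x i.
Proof.
elim: s L => [|p t IH] L /=.
  by move=> _ _; rewrite big_nil big1 // => i _; rewrite scale0r.
move=> /and3P [h1 h2 h3] /andP [hN hall]; rewrite big_cons (IH _ h3 hall).
rewrite [RHS](bigD1 (Ordinal hN)) //= eqxx.
rewrite [X in _ + X = _](bigD1 (Ordinal hN)) //=.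
rewrite (@gfun_zero F p.2 t p.1 h3 h2) scale0r add0r; congr (_ + _).
apply: eq_bigr => i hi.
have -> : (i == p.1 :> nat) = false.
  by apply/negbTE; move: hi; apply: contra => /eqP h; apply/eqP/val_inj.
done.
Qed.

Lemma gfun_mul (F G : nat * nat -> R) s i :
  gfun (fun p => F p * G p) s i = gfun F s i * gfun G s i.
Proof. by elim: s => [|p t IH] /=; [rewrite mul0r | case: eqP]. Qed.

Lemma gfun_bound (F : nat * nat -> R) K s i : 0 <= K -> (forall p, `|F p| <= K) ->
  `|gfun F s i| <= K.
Proof. by move=> K0 hF; elim: s => [|p t IH] /=; [rewrite normr0 | case: eqP]. Qed.

Hypothesis hunc : one_unconditional x.

Lemma seq_mult_le (a C : nat * nat -> R) K L s : admd L s -> 0 <= K ->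
  (forall p, `|a p| <= K) ->
  `|\sum_(p <- s) (a p * C p) *: x p.1| <= K * `|\sum_(p <- s) C p *: x p.1|.
Proof.
move=> hs K0 ha; have [N hN] := bound_exists s.
rewrite (gfun_sum (fun p => a p * C p) hs hN) (gfun_sum C hs hN).
under eq_bigr do rewrite gfun_mul.
apply: mult_le => // i; exact: gfun_bound.
Qed.

Lemma Jd_prod (A B : nat -> R) KA KB L s : admd L s -> 0 <= KA -> 0 <= KB ->
  (forall i, `|A i| <= KA) -> (forall i, `|B i| <= KB) ->
  `|Jd_term x (fun i => A i * B i) s| <=
  KA * `|Jd_term x B s| + KB * `|Jd_term x A s|.
Proof.
move=> hs hKA hKB hA hB.
have -> : Jd_term x (fun i => A i * B i) s =
   \sum_(p <- s) (A p.1 * (B p.1 - B p.2)) *: x p.1 +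
   \sum_(p <- s) (B p.2 * (A p.1 - A p.2)) *: x p.1.
  rewrite /Jd_term -big_split /=; apply: eq_bigr => p _.
  rewrite -scalerDl; congr (_ *: _); ring.
apply: (le_trans (ler_normD _ _)); apply: lerD.
  exact: (@seq_mult_le (fun p => A p.1) (fun p => B p.1 - B p.2) KA L s).
exact: (@seq_mult_le (fun p => B p.2) (fun p => A p.1 - A p.2) KB L s).
Qed.
End Gfun.

Section Clip.
Variables (R : realType) (X : normedModType R) (x : nat -> X).

Lemma J_term_cons (a : nat -> R) p t :
  J_term x a (p :: t) = (\sum_(p.1 <= i < p.2.+1) a i) *: x p.1 + J_term x a t.
Proof. by rewrite /J_term big_cons. Qed.

Lemma J_term_nil (a : nat -> R) : J_term x a [::] = 0.
Proof. by rewrite /J_term big_nil. Qed.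

Fixpoint clip (N M : nat) (s : seq (nat * nat)) : seq (nat * nat) :=
  if s is p :: t then
    (if (N < p.1)%N then [::] else if (N <= p.2)%N then [:: (p.1, M)] else p :: clip N M t)
  else [::].

Lemma clip_zero (qq : nat -> R) N L s : (forall j, (N < j)%N -> qq j = 0) ->
  adm L s -> (N < L)%N -> J_term x qq s = 0.
Proof.
rewrite /J_term => hq; elim: s L => [|p t IH] L /=; first by rewrite big_nil.
move=> /and3P [h1 h2 h3] hL; rewrite big_cons (IH _ h3); last first.
  by rewrite ltnS (leq_trans (ltnW (leq_trans hL h1)) h2).
rewrite big_nat_cond big1 ?scale0r ?addr0 // => i /andP [/andP [hi _] _].
by apply: hq; exact: leq_trans (leq_trans hL h1) hi.
Qed.

Lemma clip_ok (b qq : nat -> R) N M :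
  (forall j, (j < N)%N -> qq j = b j) ->
  qq N = \sum_(N <= i < M.+1) b i ->
  (forall j, (N < j)%N -> qq j = 0) -> (N <= M)%N ->
  forall L s, adm L s -> adm L (clip N M s) /\ J_term x qq s = J_term x b (clip N M s).
Proof.
move=> hlt hN hgt hNM L s; elim: s L => [|p t IH] L /=; first by move=> _; split => //; rewrite /J_term !big_nil.
move=> /and3P [h1 h2 h3].
case: ltnP => hp1.
  split => //; rewrite /J_term big_nil; apply: (@clip_zero qq N p.1) => //=.
  by rewrite leqnn h2.
case: leqP => hp2.
  split; first by rewrite /= h1 (leq_trans hp1 hNM).
  rewrite !J_term_cons J_term_nil /=.
  rewrite (@clip_zero qq N p.2.+1 t hgt h3) ?ltnS // !addr0; congr (_ *: _).
  rewrite (@big_cat_nat _ _ _ N) //= ?(leqW hp2) //.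
  rewrite [RHS](@big_cat_nat _ _ _ N) //= ?(leqW hNM) //.
  rewrite [X in _ + X = _]big_ltn ?ltnS // hN [X in _ + (_ + X) = _]big_nat_cond.
  rewrite [X in _ + (_ + X) = _]big1 ?addr0; last first.
    by move=> i /andP [/andP [hi _] _]; apply: hgt.
  congr (_ + _); apply: eq_big_nat => i /andP [_ hi]; exact: hlt.
have [IH1 IH2] := IH _ h3.
split; first by rewrite /= h1 h2.
rewrite !J_term_cons IH2; congr (_ *: _ + _).
apply: eq_big_nat => i /andP [_ hi]; apply: hlt; exact: leq_trans hi hp2.
Qed.
End Clip.

Section Gen.
Variables (R : realType) (V : normedModType R).

Lemma lin0 (f : V -> R) : bdd_linear f -> f 0 = 0.
Proof.
move=> [hl _]; have := hl 1 0 0; rewrite scale1r addr0 mul1r => h.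
by have := subrr (f 0); rewrite {1}h addrK.
Qed.

Lemma linD (f : V -> R) y z : bdd_linear f -> f (y + z) = f y + f z.
Proof. by move=> [hl _]; rewrite -{1}[y]scale1r hl mul1r. Qed.

Lemma linZ (f : V -> R) c y : bdd_linear f -> f (c *: y) = c * f y.
Proof. by move=> hf; rewrite -[c *: y]addr0 (proj1 hf) (lin0 hf) addr0. Qed.

Lemma linN (f : V -> R) y : bdd_linear f -> f (- y) = - f y.
Proof. by move=> hf; rewrite -scaleN1r linZ // mulN1r. Qed.

Lemma linB (f : V -> R) y z : bdd_linear f -> f (y - z) = f y - f z.
Proof. by move=> hf; rewrite linD // linN. Qed.

Lemma lin_sum (f : V -> R) (I : Type) (r : seq I) (a : I -> R) (g : I -> V) :
  bdd_linear f -> f (\sum_(i <- r) a i *: g i) = \sum_(i <- r) a i * f (g i).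
Proof.
move=> hf; elim: r => [|i r IH]; first by rewrite !big_nil lin0.
by rewrite !big_cons linD // linZ // IH.
Qed.

Lemma lin_bound (f : V -> R) : bdd_linear f ->
  exists C, 0 <= C /\ forall y, `|f y| <= C * `|y|.
Proof.
move=> [_ [C hC]]; exists (Num.max C 0); split; first by rewrite le_max lexx orbT.
move=> y; apply: (le_trans (hC y)); apply: ler_wpM2r => //; by rewrite le_max lexx.
Qed.

Lemma blin_add (f g : V -> R) : bdd_linear f -> bdd_linear g ->
  bdd_linear (fun y => f y + g y).
Proof.
move=> hf hg; split.
  by move=> c y z; rewrite (proj1 hf) (proj1 hg); ring.
have [C1 [_ h1]] := lin_bound hf; have [C2 [_ h2]] := lin_bound hg.
exists (C1 + C2) => y; apply: (le_trans (ler_normD _ _)).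
by rewrite mulrDl; apply: lerD.
Qed.

Lemma blin_scale (f : V -> R) (c : R) : bdd_linear f -> bdd_linear (fun y => c * f y).
Proof.
move=> hf; split.
  by move=> d y z; rewrite (proj1 hf); ring.
have [C1 [_ h1]] := lin_bound hf.
exists (`|c| * C1) => y; rewrite normrM -mulrA; apply: ler_wpM2l => //.
Qed.

Lemma blin_sub (f g : V -> R) : bdd_linear f -> bdd_linear g ->
  bdd_linear (fun y => f y - g y).
Proof.
move=> hf hg; have -> : (fun y => f y - g y) = (fun y => f y + (-1) * g y).
  by apply: funext => y; rewrite mulN1r.
by apply: blin_add => //; apply: blin_scale.
Qed.

Lemma blin_zero : bdd_linear (fun _ : V => (0 : R)).
Proof. split; first by move=> *; ring. by exists 0 => y; rewrite normr0 mul0r. Qed.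

Lemma blin_sum (I : Type) (r : seq I) (F : I -> V -> R) :
  (forall i, bdd_linear (F i)) -> bdd_linear (fun y => \sum_(i <- r) F i y).
Proof.
move=> hF; elim: r => [|i r IH].
  have -> : (fun y : V => \sum_(i <- [::]) F i y) = (fun _ => 0).
    by apply: funext => y; rewrite big_nil.
  exact: blin_zero.
have -> : (fun y : V => \sum_(j <- i :: r) F j y) = (fun y => F i y + \sum_(j <- r) F j y).
  by apply: funext => y; rewrite big_cons.
exact: blin_add.
Qed.

Definition dset (f : V -> R) := [set `|f y| | y in [set y : V | `|y| <= 1]].

Lemma dset_sup (f : V -> R) : bdd_linear f -> has_sup (dset f).
Proof.
move=> hf; have [C [C0 hC]] := lin_bound hf.
split; first by exists (`|f 0|); exists 0 => //=; rewrite normr0.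
exists C => z [y hy <-]; apply: (le_trans (hC y)).
by rewrite -{2}[C]mulr1; apply: ler_wpM2l.
Qed.

Lemma dnorm_ge (f : V -> R) y : bdd_linear f -> `|y| <= 1 -> `|f y| <= dnorm f.
Proof. by move=> hf hy; apply: (sup_upper_bound (dset_sup hf)); exists y. Qed.

Lemma dnorm_le (f : V -> R) K : (forall y, `|y| <= 1 -> `|f y| <= K) -> dnorm f <= K.
Proof.
move=> h; apply: ge_sup; first by exists (`|f 0|); exists 0 => //=; rewrite normr0.
by move=> z [y hy <-]; apply: h.
Qed.

Lemma dnorm_ge0 (f : V -> R) : bdd_linear f -> 0 <= dnorm f.
Proof.
move=> hf; apply: le_trans (dnorm_ge (y := 0) hf _); rewrite ?normr0 //.
Qed.

Lemma dnorm_app (f : V -> R) y : bdd_linear f -> `|f y| <= dnorm f * `|y|.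
Proof.
move=> hf; case: (eqVneq y 0) => [->|hy].
  by rewrite lin0 // !normr0 mulr0.
have ny : 0 < `|y| by rewrite normr_gt0.
have := dnorm_ge (y := `|y|^-1 *: y) hf _.
rewrite normrZ normrV ?unitfE ?normr_eq0 // normr_id mulVf ?normr_eq0 // lexx => /(_ isT).
rewrite linZ // normrM normrV ?unitfE ?normr_eq0 // normr_id => h.
by rewrite -ler_pdivrMr // mulrC.
Qed.

End Gen.

Section JXsec.
Variables (R : realType) (X : completeNormedModType R) (x : nat -> X)
  (JX : completeNormedModType R) (e : nat -> JX)
  (s : JX -> R) (estar : nat -> JX -> R).
Hypotheses (hnorm : normalized x) (hunc : one_unconditional x)
  (hJ : forall (n : nat) (a : nat -> R),
     `|\sum_(i < n) a i *: e i| = J_norm x (trunc n a))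
  (hden : forall (y : JX) (eps : R), 0 < eps ->
     exists (n : nat) (a : nat -> R), `|y - \sum_(i < n) a i *: e i| < eps)
  (hs : bdd_linear s) (hse : forall j, s (e j) = 1)
  (hes : forall i, bdd_linear (estar i))
  (hee : forall i j, estar i (e j) = (i == j)%:R).

Local Notation v := (vseq s estar).
Local Notation fin n a := (\sum_(i < n) a i *: e i).

Lemma trunc0 n (a : nat -> R) i : (n <= i)%N -> trunc n a i = 0.
Proof. by rewrite /trunc ltnNge => ->. Qed.

Lemma blin_v k : bdd_linear (v k).
Proof.
rewrite /vseq.
have -> : (fun y => s y - \sum_(j < k) estar j y) =
          (fun y => s y + (-1) * \sum_(j < k) estar j y).
  by apply: funext => y; rewrite mulN1r.
apply: blin_add => //; apply: blin_scale; exact: blin_sum.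
Qed.

Lemma estar_fin j n (a : nat -> R) : estar j (fin n a) = trunc n a j.
Proof.
rewrite lin_sum // /trunc; elim: n => [|n IH]; first by rewrite big_ord0.
rewrite big_ord_recr /= IH hee.
case: (ltngtP j n) => h.
- by rewrite ltnS (ltnW h) mulr0 addr0.
- by rewrite ltnS leqNgt h mulr0 addr0.
- by rewrite h ltnSn mulr1 add0r.
Qed.

Lemma s_fin n (a : nat -> R) : s (fin n a) = \sum_(i < n) a i.
Proof. by rewrite lin_sum //; apply: eq_bigr => i _; rewrite hse mulr1. Qed.

Lemma sum_trunc n (a : nat -> R) : \sum_(i < n) a i = \sum_(0 <= i < n) trunc n a i.
Proof. by rewrite big_mkord; apply: eq_bigr => i _; rewrite /trunc ltn_ord. Qed.

Lemma v_fin k n (a : nat -> R) : v k (fin n a) = \sum_(k <= j < n) trunc n a j.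
Proof.
rewrite /vseq s_fin sum_trunc.
have -> : \sum_(j < k) estar j (fin n a) = \sum_(0 <= j < k) trunc n a j.
  by rewrite big_mkord; apply: eq_bigr => j _; rewrite estar_fin.
case: (leqP k n) => hk.
  by rewrite -(G_split (fun i hi => @trunc0 n a i hi) (leq0n k)) addrAC subrr add0r.
rewrite [RHS]big_geq ?(ltnW hk) //.
by rewrite -(@sum_ext R (trunc n a) n (fun i hi => @trunc0 n a i hi) 0 k (ltnW hk)) subrr.
Qed.

Lemma v_fin_diff k m n (a : nat -> R) : (k <= m.+1)%N ->
  v k (fin n a) - v m.+1 (fin n a) = \sum_(k <= i < m.+1) trunc n a i.
Proof.
move=> hkm; rewrite !v_fin.
by rewrite -(G_split (fun i hi => @trunc0 n a i hi) hkm) addrK.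
Qed.

Lemma v_e i j : v i (e j) = (i <= j)%:R.
Proof.
rewrite /vseq hse.
have -> : \sum_(k < i) estar k (e j) = (j < i)%:R.
  elim: i => [|i IH]; first by rewrite big_ord0.
  rewrite big_ord_recr /= IH hee.
  case: (ltngtP j i) => h.
  - by rewrite ltnS (ltnW h) addr0.
  - by rewrite ltnS leqNgt h addr0.
  - by rewrite h ltnSn add0r.
rewrite ltnNge; case: leqP => _ /=; by rewrite ?subrr ?subr0.
Qed.

Lemma dens_gen (F : JX -> R) (K : R) : 0 <= K ->
  (forall y z, F y <= F z + K * `|y - z|) ->
  (forall n (a : nat -> R), F (fin n a) <= `|fin n a|) -> forall y, F y <= `|y|.
Proof.
move=> K0 hlip hfin y; apply/ler_addgt0Pr => eps heps.
have hd : 0 < eps / (K + 1) by rewrite divr_gt0 // ltr_wpDl.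
have [n [a ha]] := hden y hd.
have h1 := hlip y (fin n a).
have h2 := hfin n a.
have h3 : `|fin n a| <= `|y| + `|y - fin n a|.
  by have := ler_normD y (fin n a - y); rewrite addrCA subrr addr0 (distrC (fin n a)).
have h4 : (K + 1) * `|y - fin n a| <= eps.
  rewrite -ler_pdivlMl ?ltr_wpDl // mulrC; exact: ltW.
nra.
Qed.

Section Ops.
Variables (W : normedModType R) (I : Type) (r : seq I) (F : I -> JX -> R) (g : I -> W).
Hypothesis hF : forall i, bdd_linear (F i).

Lemma op_bound : exists K, 0 <= K /\ forall w, `|\sum_(i <- r) F i w *: g i| <= K * `|w|.
Proof.
elim: r => [|i t [K [K0 hK]]].
  by exists 0; split => // w; rewrite big_nil normr0 mul0r.
have [C [C0 hC]] := lin_bound (hF i).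
exists (C * `|g i| + K); split; first by rewrite addr_ge0 // mulr_ge0.
move=> w; rewrite big_cons; apply: (le_trans (ler_normD _ _)).
rewrite mulrDl; apply: lerD => //.
by rewrite normrZ mulrAC; apply: ler_wpM2r.
Qed.

Lemma op_sub y z : \sum_(i <- r) F i y *: g i - \sum_(i <- r) F i z *: g i =
  \sum_(i <- r) F i (y - z) *: g i.
Proof. by rewrite -sumrB; apply: eq_bigr => i _; rewrite linB // scalerBl. Qed.

Lemma dens_op : (forall n (a : nat -> R), `|\sum_(i <- r) F i (fin n a) *: g i| <= `|fin n a|) ->
  forall y, `|\sum_(i <- r) F i y *: g i| <= `|y|.
Proof.
move=> hfin; have [K [K0 hK]] := op_bound.
apply: (@dens_gen (fun y => `|\sum_(i <- r) F i y *: g i|) K K0) => // y z.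
have := ler_normD (\sum_(i <- r) F i z *: g i) (\sum_(i <- r) F i y *: g i - \sum_(i <- r) F i z *: g i).
rewrite addrCA subrr addr0 op_sub => h; apply: (le_trans h); rewrite lerD2l; exact: hK.
Qed.
End Ops.

Lemma J1_adm k n : (k <= n)%N -> J_admissible [:: (k, n)].
Proof. by move=> h; apply: (@adm_J 0); rewrite /= h. Qed.

Lemma trunc_hb n (a : nat -> R) : forall i, (n <= i)%N -> trunc n a i = 0.
Proof. by move=> i hi; exact: trunc0. Qed.

Lemma vbound k y : `|v k y| <= `|y|.
Proof.
have H : forall n (a : nat -> R), `|\sum_(i <- [:: k]) v i (fin n a) *: x i| <= `|fin n a|; last first.
  have := @dens_op X nat [:: k] (fun i => v i) x (fun i => blin_v i) H y.
  by rewrite big_cons big_nil addr0 normrZ hnorm mulr1.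
move=> n a; rewrite big_cons big_nil addr0 normrZ hnorm mulr1 v_fin hJ.
case: (leqP k n) => hk; last by rewrite big_geq ?(ltnW hk) // normr0; apply: le_trans (Jterm_le_norm hnorm (@trunc_hb n a) (s := [::]) isT); rewrite normr_ge0.
have := Jterm_le_norm hnorm (@trunc_hb n a) (J1_adm hk).
rewrite J_term_cons J_term_nil addr0 normrZ hnorm mulr1.
by rewrite big_nat_recr //= trunc0 // addr0.
Qed.

Definition Tmap (s0 : seq (nat * nat)) (y : JX) : X :=
  \sum_(p <- s0) (v p.1 y - v p.2.+1 y) *: x p.1.

Lemma Tmap_fin s0 n (a : nat -> R) : J_admissible s0 -> Tmap s0 (fin n a) = J_term x (trunc n a) s0.
Proof.
move=> /andP [ha _]; rewrite /Tmap /J_term big_seq_cond [RHS]big_seq_cond.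
apply: eq_bigr => p /andP [hp _]; rewrite v_fin_diff //.
by have := allP ha p hp => /= h; apply: leqW.
Qed.

Lemma Tmap_le s0 y : J_admissible s0 -> `|Tmap s0 y| <= `|y|.
Proof.
move=> hs0; apply: (@dens_op X _ s0 (fun p y => v p.1 y - v p.2.+1 y) (fun p => x p.1)).
  by move=> p; apply: blin_sub; apply: blin_v.
move=> n a; have := Tmap_fin n a hs0; rewrite /Tmap => ->.
rewrite hJ; exact: (Jterm_le_norm hnorm (@trunc_hb n a) hs0).
Qed.

Definition qc N y j := if (j < N)%N then estar j y else v N y.
Definition Qmap N y := \sum_(j < N.+1) qc N y j *: e j.

Lemma blin_qc N j : bdd_linear (fun y => qc N y j).
Proof. by rewrite /qc; case: (j < N)%N; [apply: hes | apply: blin_v]. Qed.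

Lemma Qmap_le N y : `|Qmap N y| <= `|y|.
Proof.
apply: (@dens_op JX _ (index_enum 'I_N.+1) (fun j y => qc N y j) (fun j => e j)).
  by move=> j; apply: blin_qc.
move=> n a.
set c := fun j => qc N (fin n a) j.
have -> : \sum_(i <- index_enum 'I_N.+1) qc N (fin n a) i *: e i = fin N.+1 c by [].
rewrite !hJ; apply: ge_sup.
  by exists (`|J_term x (trunc N.+1 c) [::]|); exists [::].
move=> z [s0 hs0 <-].
have h1 : forall j, (j < N)%N -> trunc N.+1 c j = trunc n a j.
  by move=> j hj; rewrite /trunc ltnS (ltnW hj) /c /qc hj estar_fin.
have h2 : trunc N.+1 c N = \sum_(N <= i < (n + N).+1) trunc n a i.
  rewrite /trunc ltnSn /c /qc ltnn v_fin.
  rewrite (@sum_ext R (trunc n a) n (@trunc_hb n a) N (n + N).+1) //.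
  by apply: leqW; apply: leq_addr.
have h3 : forall j, (N < j)%N -> trunc N.+1 c j = 0 by move=> j hj; rewrite trunc0.
have [ad ->] := @clip_ok R X x (trunc n a) (trunc N.+1 c) N (n + N) h1 h2 h3 (leq_addl n N) 0 s0 (J_adm hs0).
exact: (Jterm_le_norm hnorm (@trunc_hb n a) (adm_J ad)).
Qed.

Lemma v_split i N y : (i <= N)%N -> v i y = v N y + \sum_(i <= j < N) estar j y.
Proof.
move=> hiN; rewrite /vseq -addrA; congr (_ + _).
have -> : \sum_(j < N) estar j y = \sum_(j < i) estar j y + \sum_(i <= j < N) estar j y.
  by rewrite -!(big_mkord xpredT (fun j => estar j y)) -big_cat_nat.
by rewrite opprD subrK.
Qed.

Lemma v_Q i N y : v i (Qmap N y) = if (i <= N)%N then v i y else 0.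
Proof.
rewrite /Qmap v_fin; case: leqP => hi.
  rewrite big_nat_recr /= ?(leq_trans hi) // /trunc ltnSn /qc ltnn.
  rewrite (v_split y hi) addrC; congr (_ + _); apply: eq_big_nat => j /andP [_ hj].
  by rewrite ltnS (ltnW hj) hj.
by rewrite big_geq.
Qed.

Lemma s_Q N y : s (Qmap N y) = s y.
Proof.
have h0 : forall z, v 0 z = s z by move=> z; rewrite /vseq big_ord0 subr0.
by rewrite -h0 v_Q leq0n h0.
Qed.

Lemma estar_Q j N y : (j < N)%N -> estar j (Qmap N y) = estar j y.
Proof. by move=> hj; rewrite /Qmap estar_fin /trunc ltnS (ltnW hj) /qc hj. Qed.

Lemma blin_fcomb n (a : nat -> R) : bdd_linear (fcomb n a v).
Proof. by apply: blin_sum => i; apply: blin_scale; apply: blin_v. Qed.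

Lemma fcomb_Q m n (a : nat -> R) y : (m <= n)%N ->
  fcomb m.+1 a v y = fcomb n.+1 a v (Qmap m y).
Proof.
move=> hmn; rewrite /fcomb (big_ord_widen n.+1 (fun i => a i * v i y)) ?ltnS //.
rewrite big_mkcond; apply: eq_bigr => i _; rewrite v_Q ltnS.
by case: leqP => //; rewrite mulr0.
Qed.

Lemma fcomb_mono m n (a : nat -> R) : (m <= n)%N ->
  dnorm (fcomb m a v) <= dnorm (fcomb n a v).
Proof.
case: m => [|m] hmn.
  apply: dnorm_le => y _; rewrite /fcomb big_ord0 normr0.
  exact: dnorm_ge0 (blin_fcomb _ _).
case: n hmn => [//|n] hmn.
apply: dnorm_le => y hy; rewrite (@fcomb_Q m n a y hmn).
apply: dnorm_ge; first exact: blin_fcomb.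
exact: le_trans (Qmap_le _ _) hy.
Qed.

Definition af (f : JX -> R) (i : nat) : R :=
  if i is j.+1 then f (e j.+1) - f (e j) else f (e 0%N).

Lemma fQ f N y : bdd_linear f ->
  f (Qmap N y) = \sum_(j < N) estar j y * f (e j) + v N y * f (e N).
Proof.
move=> hf; rewrite /Qmap lin_sum // big_ord_recr /= /qc ltnn; congr (_ + _).
by apply: eq_bigr => j _; rewrite ltn_ord.
Qed.

Lemma fcomb_af f N y : bdd_linear f -> fcomb N.+1 (af f) v y = f (Qmap N y).
Proof.
move=> hf; elim: N => [|N IH].
  by rewrite /fcomb big_ord1 fQ // big_ord0 add0r /= mulrC.
have -> : fcomb N.+2 (af f) v y = fcomb N.+1 (af f) v y + af f N.+1 * v N.+1 y.
  by rewrite /fcomb big_ord_recr.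
rewrite IH !fQ // big_ord_recr /= (v_split y (leqnSn N)) big_nat1.
ring.
Qed.

Lemma exp_exists f : Jstar s estar f -> expansion v f (af f).
Proof.
case=> hf [c hc]; rewrite /expansion; apply/cvgr0Pnorm_lt => eps heps.
have [n [b hb]] := hc (eps / 3%:R) (divr_gt0 heps (ltr0Sn _ _)).
set h := fun y => f y - c * s y - \sum_(i < n) b i * estar i y.
have hh : bdd_linear h.
  apply: blin_sub; first by apply: blin_sub => //; exact: blin_scale.
  by apply: blin_sum => i; exact: blin_scale.
exists n.+1 => // N /= hN.
case: N hN => // M hM.
have hd : dnorm (fun y => f y - fcomb M.+1 (af f) v y) <= dnorm h + dnorm h.
  apply: dnorm_le => y hy; rewrite fcomb_af //.
  have -> : f y - f (Qmap M y) = h y - h (Qmap M y).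
    rewrite /h s_Q.
    have -> : \sum_(i < n) b i * estar i (Qmap M y) = \sum_(i < n) b i * estar i y.
      apply: eq_bigr => i _; rewrite estar_Q //.
      exact: leq_trans (ltn_ord i) hM.
    ring.
  apply: (le_trans (ler_normB _ _)); apply: lerD; apply: dnorm_ge => //.
  exact: le_trans (Qmap_le _ _) hy.
rewrite ger0_norm; last by apply: dnorm_ge0; apply: blin_sub => //; exact: blin_fcomb.
apply: (le_lt_trans hd); move: hb; rewrite -/h => hb'; lra.
Qed.

Lemma norm_e j : `|e j| = 1.
Proof.
apply/eqP; rewrite eq_le; apply/andP; split.
  have -> : e j = fin j.+1 (fun i => (i == j)%:R).
    by rewrite big_ord_recr /= eqxx scale1r big1 ?add0r // => i _; rewrite (ltn_eqF (ltn_ord i)) scale0r.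
  rewrite (hJ j.+1 (fun i => (i == j)%:R)); apply: le_trans (Jnorm_le hnorm (@trunc_hb j.+1 _)) _.
  rewrite big_ord_recr /= /trunc ltnSn eqxx normr1 big1 ?add0r // => i _.
  by rewrite ltnS (ltnW (ltn_ord i)) (ltn_eqF (ltn_ord i)) normr0.
by have := vbound j (e j); rewrite v_e leqnn normr1.
Qed.

Lemma fcomb_e N (a : nat -> R) j : (j < N)%N -> fcomb N a v (e j) = \sum_(i < j.+1) a i.
Proof.
move=> hj; rewrite /fcomb (big_ord_widen N a hj) [RHS]big_mkcond; apply: eq_bigr => i _.
by rewrite v_e ltnS; case: leqP; rewrite ?mulr1 ?mulr0.
Qed.

Lemma exp_sums f (a : nat -> R) : bdd_linear f -> expansion v f a ->
  forall j, \sum_(i < j.+1) a i = f (e j).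
Proof.
move=> hf ha j; apply/eqP; rewrite -subr_eq0 -normr_le0; apply/ler_addgt0Pr => eps heps.
rewrite add0r; have [N0 _ hN] := (cvgr0Pnorm_lt _).1 ha eps heps.
have hN1 := hN (maxn N0 j.+1) (leq_maxl _ _).
have hb : bdd_linear (fun y => f y - fcomb (maxn N0 j.+1) a v y).
  by apply: blin_sub => //; exact: blin_fcomb.
have := dnorm_ge (y := e j) hb; rewrite norm_e lexx => /(_ isT).
rewrite fcomb_e ?leq_maxr // distrC => h.
apply: (le_trans h); apply: ltW; apply: le_lt_trans hN1; exact: ler_norm.
Qed.

Lemma exp_unique f (a : nat -> R) : bdd_linear f -> expansion v f a -> a = af f.
Proof.
move=> hf ha; apply: funext => -[|j] /=.
  by have := exp_sums hf ha 0; rewrite big_ord1.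
have h1 := exp_sums hf ha j.+1; have h2 := exp_sums hf ha j.
by rewrite -h1 -h2 big_ord_recr /= addrC addrK.
Qed.

Lemma coefE f : Jstar s estar f -> coef v f = af f.
Proof.
move=> hJf; have hex := exp_exists hJf.
have := epsilon_spec (inhabits (fun _ : nat => (0 : R))) (expansion v f) (ex_intro _ _ hex).
rewrite -/(coef v f) => h; exact: exp_unique (proj1 hJf) h.
Qed.

Definition Jspan (f : JX -> R) := exists (c : R) (n : nat) (b : nat -> R),
  forall y, f y = c * s y + \sum_(i < n) b i * estar i y.

Lemma Jspan_Js f : bdd_linear f -> Jspan f -> Jstar s estar f.
Proof.
move=> hf [c [n [b hb]]]; split => //; exists c => eps heps; exists n, b.
apply: le_lt_trans heps; apply: dnorm_le => y _.
rewrite hb; set A := c * s y; set B := \sum_(i < n) _.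
have -> : A + B - A - B = 0 by ring.
by rewrite normr0.
Qed.

Lemma sum_trunc_widen (n N : nat) (b : nat -> R) (F : nat -> R) : (n <= N)%N ->
  \sum_(i < N) trunc n b i * F i = \sum_(i < n) b i * F i.
Proof.
move=> hnN; rewrite (big_ord_widen N (fun i => b i * F i) hnN) [RHS]big_mkcond.
by apply: eq_bigr => i _; rewrite /trunc; case: ifP; rewrite ?mul0r.
Qed.

Lemma Jspan_add f g : Jspan f -> Jspan g -> Jspan (fun y => f y + g y).
Proof.
move=> [c1 [n1 [b1 h1]]] [c2 [n2 [b2 h2]]].
exists (c1 + c2), (n1 + n2)%N, (fun i => trunc n1 b1 i + trunc n2 b2 i) => y.
rewrite h1 h2.
have -> : \sum_(i < n1 + n2) (trunc n1 b1 i + trunc n2 b2 i) * estar i y =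
  \sum_(i < n1 + n2) trunc n1 b1 i * estar i y + \sum_(i < n1 + n2) trunc n2 b2 i * estar i y.
  by rewrite -big_split; apply: eq_bigr => i _; rewrite mulrDl.
rewrite (@sum_trunc_widen n1 (n1 + n2) b1 (fun i => estar i y)) ?leq_addr //.
rewrite (@sum_trunc_widen n2 (n1 + n2) b2 (fun i => estar i y)) ?leq_addl //; ring.
Qed.

Lemma Jspan_scale f (c : R) : Jspan f -> Jspan (fun y => c * f y).
Proof.
move=> [c1 [n1 [b1 h1]]]; exists (c * c1), n1, (fun i => c * b1 i) => y.
rewrite h1 mulrDr mulr_sumr mulrA; congr (_ + _); apply: eq_bigr => i _; ring.
Qed.

Lemma Jspan_sub f g : Jspan f -> Jspan g -> Jspan (fun y => f y - g y).
Proof.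
move=> hf hg; have -> : (fun y => f y - g y) = (fun y => f y + (-1) * g y).
  by apply: funext => y; rewrite mulN1r.
by apply: Jspan_add => //; apply: Jspan_scale.
Qed.

Lemma Jspan_zero : Jspan (fun _ => 0).
Proof. by exists 0, 0%N, (fun _ => 0) => y; rewrite big_ord0 mul0r addr0. Qed.

Lemma Jspan_v k : Jspan (v k).
Proof.
exists 1, k, (fun _ => -1) => y; rewrite /vseq mul1r.
by rewrite [X in _ = _ + X](eq_bigr (fun i : 'I_k => - estar i y)) ?sumrN // => i _; rewrite mulN1r.
Qed.

Lemma Jspan_sum (I : Type) (r : seq I) (F : I -> JX -> R) :
  (forall i, Jspan (F i)) -> Jspan (fun y => \sum_(i <- r) F i y).
Proof.
move=> hF; elim: r => [|i r IH].
  have -> : (fun y : JX => \sum_(i <- [::]) F i y) = (fun _ => 0).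
    by apply: funext => y; rewrite big_nil.
  exact: Jspan_zero.
have -> : (fun y : JX => \sum_(j <- i :: r) F j y) = (fun y => F i y + \sum_(j <- r) F j y).
  by apply: funext => y; rewrite big_cons.
exact: Jspan_add.
Qed.

Lemma Js_v k : Jstar s estar (v k).
Proof. exact: Jspan_Js (blin_v k) (Jspan_v k). Qed.

Lemma Js_zero : Jstar s estar (fun _ => 0).
Proof. by apply: Jspan_Js; [exact: blin_zero | exact: Jspan_zero]. Qed.

Lemma seq_to_ord (W : zmodType) (s0 : seq (nat * nat)) (F : nat * nat -> W) :
  \sum_(p <- s0) F p = \sum_(i < size s0) F (nth (0%N, 0%N) s0 i).
Proof. by rewrite (big_nth (0%N, 0%N)) big_mkord. Qed.

Definition Nset (y : JX) :=
  [set `|f y| | f in [set f | Jstar s estar f /\ dnorm f <= 1]].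

Lemma Nset_sup y : has_sup (Nset y).
Proof.
split.
  exists (`|(fun _ : JX => (0 : R)) y|); exists (fun _ => 0) => //; split; first exact: Js_zero.
  by apply: dnorm_le => z _; rewrite normr0.
exists (`|y|) => z [f [[hf _] hd] <-].
apply: (le_trans (dnorm_app y hf)); rewrite -{2}[`|y|]mul1r.
by apply: ler_wpM2r.
Qed.

Lemma norming y : `|y| = sup (Nset y).
Proof.
apply/eqP; rewrite eq_le; apply/andP; split; last first.
  apply: ge_sup; first by case: (Nset_sup y).
  move=> z [f [[hf _] hd] <-]; apply: (le_trans (dnorm_app y hf)).
  by rewrite -{2}[`|y|]mul1r; apply: ler_wpM2r.
apply/ler_addgt0Pr => eps heps.
set dl := eps / 3%:R.
have hdl : 0 < dl by rewrite divr_gt0 // ltr0Sn.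
have [n [a ha]] := hden y hdl.
set b := trunc n a.
have [z [s0 hs0 <-] hz] := sup_adherent hdl (Jset_sup hnorm (@trunc_hb n a)).
rewrite -/(J_norm x b) -hJ in hz.
have [mu [hmu1 hmu2]] := @HBfin R X (fun i => x (nth (0%N, 0%N) s0 i).1) (size s0)
   (fun i => \sum_((nth (0%N, 0%N) s0 i).1 <= j < (nth (0%N, 0%N) s0 i).2.+1) b j).
set f := fun w => \sum_(i < size s0) mu i *
   (v (nth (0%N, 0%N) s0 i).1 w - v (nth (0%N, 0%N) s0 i).2.+1 w).
have hfb : forall w, `|f w| <= `|w|.
  move=> w; apply: (le_trans (hmu1 (fun i => v (nth (0%N, 0%N) s0 i).1 w - v (nth (0%N, 0%N) s0 i).2.+1 w))).
  have := Tmap_le w hs0; rewrite /Tmap seq_to_ord; exact.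
have hfl : bdd_linear f.
  by apply: blin_sum => i; apply: blin_scale; apply: blin_sub; apply: blin_v.
have hfJ : Jstar s estar f.
  apply: Jspan_Js => //; apply: Jspan_sum => i; apply: Jspan_scale.
  by apply: Jspan_sub; apply: Jspan_v.
have hfd : dnorm f <= 1.
  by apply: dnorm_le => w hw; apply: le_trans (hfb w) hw.
have hfy' : f (fin n a) = `|J_term x b s0|.
  rewrite /J_term seq_to_ord -hmu2 /f; apply: eq_bigr => i _.
  rewrite v_fin_diff //; apply: leqW.
  have /andP [hall _] := hs0.
  by have := allP hall (nth (0%N, 0%N) s0 i) (mem_nth _ (ltn_ord i)).
have hfS : `|f y| <= sup (Nset y).
  by apply: (sup_upper_bound (Nset_sup y)); exists f.
have hlin : f y = f (fin n a) + f (y - fin n a) by rewrite -linD // addrC subrK.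
have h1 := hfb (y - fin n a).
have h2 : `|y| <= `|fin n a| + `|y - fin n a|.
  by have := ler_normD (fin n a) (y - fin n a); rewrite addrC subrK.
have h3 : f y <= `|f y| by apply: ler_norm.
have h4 : - `|f (y - fin n a)| <= f (y - fin n a).
  by rewrite lerNl -normrN; apply: ler_norm.
rewrite hfy' in hlin.
have hdl3 : eps = 3%:R * dl by rewrite /dl mulrC divfK // pnatr_eq0.
lra.
Qed.

Lemma part_ii n (a : nat -> R) : `|\sum_(i < n) a i| <= dnorm (fcomb n a v).
Proof.
case: n => [|m]; first by rewrite big_ord0 normr0; apply: dnorm_ge0; exact: blin_fcomb.
have := dnorm_ge (y := e m) (blin_fcomb m.+1 a); rewrite norm_e lexx => /(_ isT).
by rewrite fcomb_e.
Qed.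

Lemma dnorm_v i : dnorm (v i) = 1.
Proof.
apply/eqP; rewrite eq_le; apply/andP; split.
  by apply: dnorm_le => y hy; apply: le_trans (vbound i y) hy.
have := dnorm_ge (y := e i) (blin_v i); rewrite norm_e lexx => /(_ isT).
by rewrite v_e leqnn normr1.
Qed.

Lemma exp_exU f : Jstar s estar f -> exists! a : nat -> R, expansion v f a.
Proof.
move=> hf; exists (af f); split; first exact: exp_exists.
by move=> a' ha'; rewrite (exp_unique (proj1 hf) ha').
Qed.

Lemma coef_jdiff f i : Jstar s estar f -> coef v f i = f (jdiff e i).
Proof.
move=> hf; rewrite coefE //; case: i => [|i] //=.
by rewrite linB //; case: hf.
Qed.

Lemma vstar_eq n (a : nat -> R) :
  vstar_norm s estar n a = `|\sum_(i < n) a i *: jdiff e i|.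
Proof.
rewrite norming /vstar_norm /Nset; congr sup; apply/seteqP; split => z [f hf <-].
  exists f => //; case: hf => hJf _; rewrite (@lin_sum R JX f _ _ _ _ (proj1 hJf)).
  by congr `|_|; apply: eq_bigr => i _; rewrite coef_jdiff.
exists f => //; case: hf => hJf _; rewrite (@lin_sum R JX f _ _ _ _ (proj1 hJf)).
by congr `|_|; apply: eq_bigr => i _; rewrite coef_jdiff.
Qed.

Lemma jdiff_sum n (a : nat -> R) :
  \sum_(i < n.+1) a i *: jdiff e i =
  \sum_(i < n.+1) (a i - a i.+1) *: e i + a n.+1 *: e n.
Proof.
elim: n => [|n IH].
  by rewrite !big_ord1 /= scalerBl subrK.
rewrite big_ord_recr IH [in RHS]big_ord_recr /= !scalerBl !scalerBr.
set S := \sum_(i < n.+1) _.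
rewrite -!addrA; congr (_ + _).
by rewrite addNr addr0 addrCA subrr addr0.
Qed.

Lemma part_iv n (a : nat -> R) : (forall i, (n <= i)%N -> a i = 0) ->
  vstar_norm s estar n a = Jd_norm x a.
Proof.
move=> ha; rewrite vstar_eq Jd_norm_J.
set c := fun i => a i - a i.+1.
have hc : forall i, (n <= i)%N -> c i = 0.
  by move=> i hi; rewrite /c !ha ?subrr // (leq_trans hi).
have -> : \sum_(i < n) a i *: jdiff e i = fin n c.
  case: n ha hc => [|m] ha hc; first by rewrite !big_ord0.
  by rewrite jdiff_sum ha // scale0r addr0.
rewrite hJ; congr J_norm; apply: funext => i; rewrite /trunc.
by case: ltnP => // hi; rewrite hc.
Qed.

Lemma vstar_trunc n (a : nat -> R) : vstar_norm s estar n a = vstar_norm s estar n (trunc n a).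
Proof. by rewrite !vstar_eq; congr `|_|; apply: eq_bigr => i _; rewrite /trunc ltn_ord. Qed.

Lemma Jd_term_le (A : nat -> R) n (hA : forall i, (n <= i)%N -> A i = 0) sq :
  Jd_admissible sq -> `|Jd_term x A sq| <= Jd_norm x A.
Proof.
move=> hsq; have hd := Jd_admd hsq.
rewrite (Jd_J_term x A hd) Jd_norm_J.
apply: (Jterm_le_norm hnorm (n := n)); last exact: adm_J (admd_adm hd).
by move=> i hi; rewrite !hA ?subrr // (leq_trans hi).
Qed.

Lemma coord_le (A : nat -> R) n (hA : forall i, (n <= i)%N -> A i = 0) k :
  `|A k| <= Jd_norm x A.
Proof.
have hsk : Jd_admissible [:: (k, (k + n).+1)].
  by apply: (@admd_Jd 0); rewrite /= ltnS leq_addr.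
have := Jd_term_le hA hsk; rewrite /Jd_term big_cons big_nil addr0 /= normrZ hnorm mulr1.
by rewrite (hA (k + n).+1) ?subr0 // ltnW // ltnS leq_addl.
Qed.

Lemma part_v n (a b : nat -> R) :
  vstar_norm s estar n (fun i => a i * b i) <=
  2 * vstar_norm s estar n a * vstar_norm s estar n b.
Proof.
rewrite (vstar_trunc n a) (vstar_trunc n b) vstar_trunc.
rewrite !part_iv; try by move=> i hi; rewrite trunc0.
set A := trunc n a; set B := trunc n b.
have hA : forall i, (n <= i)%N -> A i = 0 by move=> i hi; rewrite /A trunc0.
have hB : forall i, (n <= i)%N -> B i = 0 by move=> i hi; rewrite /B trunc0.
have -> : trunc n (fun i => a i * b i) = (fun i => A i * B i).
  by apply: funext => i; rewrite /A /B /trunc; case: ifP; rewrite ?mul0r.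
have KA0 : 0 <= Jd_norm x A by apply: le_trans (coord_le hA 0); rewrite normr_ge0.
have KB0 : 0 <= Jd_norm x B by apply: le_trans (coord_le hB 0); rewrite normr_ge0.
apply: ge_sup; first by exists (`|Jd_term x (fun i => A i * B i) [::]|); exists [::].
move=> z [sq hsq <-].
apply: le_trans (Jd_prod hunc (Jd_admd hsq) KA0 KB0 (coord_le hA) (coord_le hB)) _.
have h1 := Jd_term_le hA hsq; have h2 := Jd_term_le hB hsq.
have h3 : Jd_norm x A * `|Jd_term x B sq| <= Jd_norm x A * Jd_norm x B by exact: ler_wpM2l.
have h4 : Jd_norm x B * `|Jd_term x A sq| <= Jd_norm x B * Jd_norm x A by exact: ler_wpM2l.
rewrite [Jd_norm x B * Jd_norm x A]mulrC in h4; lra.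
Qed.

Lemma main_all :
  ((forall i, Jstar s estar (v i)) /\ (forall i, dnorm (v i) = 1) /\
   (forall (m n : nat) (a : nat -> R), (m <= n)%N ->
      dnorm (fcomb m a v) <= dnorm (fcomb n a v)) /\
   (forall f, Jstar s estar f -> exists! a : nat -> R, expansion v f a)) /\
  (forall (n : nat) (a : nat -> R),
     `|\sum_(i < n) a i| <= dnorm (fcomb n a v)) /\
  ((forall y : JX,
      `|y| = sup [set `|f y| | f in [set f | Jstar s estar f /\ dnorm f <= 1]]) /\
   (forall f, Jstar s estar f ->
      coef v f 0 = f (e 0) /\
      forall i, coef v f i.+1 = f (e i.+1) - f (e i)) /\
   (forall (n : nat) (a : nat -> R),
      vstar_norm s estar n a =
      `|\sum_(i < n) a i *: jdiff e i|)) /\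
  (forall (n : nat) (a : nat -> R), (forall i, (n <= i)%N -> a i = 0) ->
     vstar_norm s estar n a = Jd_norm x a) /\
  (forall (n : nat) (a b : nat -> R),
     vstar_norm s estar n (fun i => a i * b i) <=
     2 * vstar_norm s estar n a * vstar_norm s estar n b).
Proof.
split.
  split; first exact: Js_v.
  split; first exact: dnorm_v.
  split; first by move=> m n a; exact: fcomb_mono.
  exact: exp_exU.
split; first exact: part_ii.
split.
  split; first exact: norming.
  split; first by move=> f hf; rewrite coefE.
  exact: vstar_eq.
split; first exact: part_iv.
exact: part_v.
Qed.
End JXsec.

Unset Implicit Arguments.
Set Strict Implicit.

Theorem proposition1p15 (R : realType) (X : completeNormedModType R)
  (x : nat -> X)
  (JX : completeNormedModType R) (e : nat -> JX)
  (s : JX -> R) (estar : nat -> JX -> R) :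
  schauder_basis x -> normalized x -> one_unconditional x ->
  (* JX, e is the jamesification J(X) with its unit vector basis *)
  (forall (n : nat) (a : nat -> R),
     `|\sum_(i < n) a i *: e i| = J_norm x (trunc n a)) ->
  (forall (y : JX) (eps : R), 0 < eps ->
     exists (n : nat) (a : nat -> R), `|y - \sum_(i < n) a i *: e i| < eps) ->
  (* s and the biorthogonals e_i^* in J(X)^* *)
  bdd_linear s -> (forall j, s (e j) = 1) ->
  (forall i, bdd_linear (estar i)) ->
  (forall i j, estar i (e j) = (i == j)%:R) ->
  let v := vseq s estar in
  let Js := Jstar s estar in
  (* (i) *)
  ((forall i, Js (v i)) /\ (forall i, dnorm (v i) = 1) /\
   (forall (m n : nat) (a : nat -> R), (m <= n)%N ->
      dnorm (fcomb m a v) <= dnorm (fcomb n a v)) /\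
   (forall f, Js f -> exists! a : nat -> R, expansion v f a)) /\
  (* (ii) *)
  (forall (n : nat) (a : nat -> R),
     `|\sum_(i < n) a i| <= dnorm (fcomb n a v)) /\
  (* (iii) *)
  ((forall y : JX,
      `|y| = sup [set `|f y| | f in [set f | Js f /\ dnorm f <= 1]]) /\
   (forall f, Js f ->
      coef v f 0 = f (e 0) /\
      forall i, coef v f i.+1 = f (e i.+1) - f (e i)) /\
   (forall (n : nat) (a : nat -> R),
      vstar_norm s estar n a =
      `|\sum_(i < n) a i *: jdiff e i|)) /\
  (* (iv) *)
  (forall (n : nat) (a : nat -> R), (forall i, (n <= i)%N -> a i = 0) ->
     vstar_norm s estar n a = Jd_norm x a) /\
  (* (v) *)
  (forall (n : nat) (a b : nat -> R),
     vstar_norm s estar n (fun i => a i * b i) <=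
     2 * vstar_norm s estar n a * vstar_norm s estar n b).
Proof.
move=> _ hnorm hunc hJ hden hs hse hes hee v Js.
by apply: main_all.
Qed.
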